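(* Let $\alpha\in\mathbb N$ and $n\ge 0$. The $(i,j)$-th entry ($0\le i,j\le n$) of the inverse of the matrix $(1/F_{\alpha+i+j})_{0\le i,j\le n}$ is $$(-1)^{n(\alpha+i+j)-\binom{i}{2}-\binom{j}{2}}F_{\alpha+i+j}\binom{\alpha+n+i}{n-j}_{\mathbb F}\binom{\alpha+n+j}{n-i}_{\mathbb F}\binom{\alpha+i+j-1}{i}_{\mathbb F}\binom{\alpha+i+j-1}{j}_{\mathbb F}.$$
   Context: $F_n$ are the Fibonacci numbers ($F_0=0,F_1=1,F_{n+1}=F_n+F_{n-1}$). The Fibonomial coefficients are $\binom{n}{k}_{\mathbb F}=\prod_{i=1}^k F_{n-i+1}/F_i$ for $0\le k\le n$ (empty product $=1$). *)

(* Defs.v *)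
From mathcomp Require Import all_boot all_order all_algebra.
Set Implicit Arguments. Unset Strict Implicit. Unset Printing Implicit Defensive.
Import Order.TTheory GRing.Theory Num.Theory.

Fixpoint fib (n : nat) : nat :=
  match n with
  | 0 => 0
  | 1 => 1
  | (m.+1 as k).+1 => fib k + fib m
  end.

(* Fibonomial coefficient  binom(n,k)_F = prod_{i=1}^k F_{n-i+1} / F_i,
   computed in rat (used only for 0 <= k <= n). *)
Definition fibonomial (n k : nat) : rat :=
  (\prod_(1 <= i < k.+1) ((fib (n - i + 1))%:R / (fib i)%:R))%R.

(* Main.v *)
Require Import Defs.
From mathcomp Require Import all_boot all_order all_algebra.
From mathcomp Require Import zify ring lra.
Import Order.TTheory GRing.Theory Num.Theory.
Local Open Scope ring_scope.

Section Lag.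
Variable K : fieldType.

Lemma lagrange0 (I : finType) (t : I -> K) (p : {poly K}) :
  injective t -> (size p < #|I|)%N ->
  \sum_(j : I) p.[t j] / \prod_(l | l != j) (t j - t l) = 0.
Proof.
move=> tinj sp.
pose c j := \prod_(l | l != j) (t j - t l).
have c0 j : c j != 0.
  by apply/prodf_neq0 => l lj; rewrite subr_eq0 (inj_eq tinj) eq_sym.
pose P j := \prod_(l | l != j) ('X - (t l)%:P).
pose q := \sum_j (p.[t j] / c j) *: P j.
have Pt j i : (P j).[t i] = if i == j then c j else 0.
  rewrite horner_prod; case: eqP => [->|/eqP ij].
    by apply: eq_bigr => l _; rewrite hornerXsubC.
  by rewrite (bigD1 i) //= hornerXsubC subrr mul0r.
have sP j : size (P j) = #|I|.
  rewrite /P -big_filter size_prod_XsubC size_filter.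
  have := cardC1 j; rewrite cardE /enum_mem size_filter.
  have : (0 < #|I|)%N by apply/card_gt0P; exists j.
  by move=> H1 H2; rewrite H2 prednK.
have mP j : P j \is monic by apply: monic_prod_XsubC.
have qt i : q.[t i] = p.[t i].
  rewrite /q horner_sum (bigD1 i) //= big1 ?addr0.
    by rewrite hornerZ Pt eqxx mulfVK.
  by move=> j ji; rewrite hornerZ Pt eq_sym (negPf ji) mulr0.
have sq : (size q <= #|I|)%N.
  rewrite /q; apply: (big_ind (fun r : {poly K} => size r <= #|I|))%N.
  - by rewrite size_poly0.
  - by move=> a b Ha Hb; apply: leq_trans (size_polyD _ _) _; rewrite geq_max Ha Hb.
  by move=> j _; apply: leq_trans (size_scale_leq _ _) _; rewrite sP.
have qp : q = p.
  apply/eqP; rewrite -subr_eq0; apply/eqP.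
  apply: (@roots_geq_poly_eq0 _ _ [seq t j | j <- enum I]).
  - by apply/allP => x /mapP [j _ ->]; rewrite /root hornerD hornerN qt subrr.
  - by rewrite map_inj_uniq // enum_uniq.
  rewrite size_map -cardE; apply: leq_trans (size_polyD _ _) _.
  by rewrite size_polyN geq_max sq ltnW.
have := congr1 (fun r : {poly K} => r`_(#|I|.-1)) qp.
rewrite /= /q coef_sum nth_default; last by rewrite -ltnS prednK // (leq_ltn_trans _ sp).
move=> H; rewrite -[RHS]H; apply: eq_bigr => j _.
rewrite coefZ.
have := mP j; rewrite qualifE /= lead_coefE sP => /eqP ->.
by rewrite mulr1.
Qed.


Lemma big_optE (R : Type) (idx : R) (op : Monoid.com_law idx) (T : finType)
  (t0 : T) (F : option T -> R) :
  \big[op/idx]_(o : option T) F o = op (F None) (\big[op/idx]_(i : T) F (Some i)).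
Proof.
rewrite (bigD1 None) //=; congr (op _ _).
rewrite (reindex_onto Some (odflt t0)) /=; last by case=> //.
by apply: eq_bigl => i; rewrite eqxx.
Qed.

Lemma cauchy (m : nat) (z w : 'I_m.+1 -> K) :
  injective z -> injective w -> (forall j l, z j != w l) -> forall i k,
  \sum_j (z j - w i)^-1 * (- (\prod_l (z j - w l)) * (\prod_l (w k - z l)) /
     ((z j - w k) * \prod_(l | l != j) (z j - z l) * \prod_(l | l != k) (w k - w l)))
  = (i == k)%:R.
Proof.
move=> zi wi zw i k.
have zw0 j l : z j - w l != 0 by rewrite subr_eq0.
have wz0 j l : w l - z j != 0 by rewrite subr_eq0 eq_sym.
have zz0 j : \prod_(l | l != j) (z j - z l) != 0.
  by apply/prodf_neq0 => l lj; rewrite subr_eq0 (inj_eq zi) eq_sym.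
have ww0 j : \prod_(l | l != j) (w j - w l) != 0.
  by apply/prodf_neq0 => l lj; rewrite subr_eq0 (inj_eq wi) eq_sym.
have wz0p j : \prod_l (w j - z l) != 0 by apply/prodf_neq0 => l _.
pose t (o : option 'I_m.+1) := if o is Some l then z l else w i.
have ti : injective t.
  case=> [a|] [b|] //= => [/zi -> //| /eqP| /eqP] ; rewrite ?(negPf (zw _ _)) //.
  by rewrite eq_sym (negPf (zw _ _)).
pose p := \prod_(l | l != k) ('X - (w l)%:P).
have sp : (size p < #|{: option 'I_m.+1}|)%N.
  rewrite card_option card_ord /p -big_filter size_prod_XsubC size_filter.
  have := cardC1 k; rewrite cardE /enum_mem size_filter card_ord /= => ->.
  by [].
have L := @lagrange0 _ t p ti sp.
rewrite (@big_optE _ _ _ _ ord0) /= in L.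
have e1 : \prod_(l | l != None) (w i - t l) = \prod_l (w i - z l).
  by rewrite big_mkcond (@big_optE _ _ _ _ ord0) /= mul1r.
have e2 j : \prod_(l | l != Some j) (z j - t l) =
   (z j - w i) * \prod_(l | l != j) (z j - z l).
  by rewrite big_mkcond (@big_optE _ _ _ _ ord0) /= [in RHS]big_mkcond.
have hp x : p.[x] = \prod_(l | l != k) (x - w l).
  by rewrite /p horner_prod; apply: eq_bigr => l _; rewrite hornerXsubC.
rewrite e1 hp in L.
pose Ck := \prod_l (w k - z l) / \prod_(l | l != k) (w k - w l).
have ej j : (z j - w i)^-1 * (- (\prod_l (z j - w l)) * (\prod_l (w k - z l)) /
     ((z j - w k) * \prod_(l | l != j) (z j - z l) * \prod_(l | l != k) (w k - w l)))
   = - Ck * (p.[t (Some j)] / \prod_(l | l != Some j) (t (Some j) - t l)).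
  rewrite e2 hp /Ck /= (bigD1 k (P := xpredT)) //=.
  by field; rewrite ?zw0 ?zz0 ?ww0.
rewrite (eq_bigr _ (fun j _ => ej j)) -mulr_sumr.
have -> : \sum_i0 p.[t (Some i0)] / \prod_(l | l != Some i0) (t (Some i0) - t l)
   = - ((\prod_(l | l != k) (w i - w l)) / \prod_l (w i - z l)).
  by apply/eqP; rewrite -addr_eq0 addrC L.
rewrite mulrNN /Ck.
have [<-|ik] := eqVneq i k.
  by rewrite /=; field; rewrite ?ww0 ?wz0p.
rewrite /= [\prod_(l | l != k) (w i - w l)](bigD1 i) 1?eq_sym //=.
by rewrite subrr !mul0r mulr0.
by rewrite eq_sym.
Qed.

End Lag.

Section BigHelp.
Variables (R : Type) (idx : R) (op : Monoid.com_law idx).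

Lemma big_neq_split n (j : 'I_n.+1) (G : nat -> R) :
  \big[op/idx]_(l < n.+1 | l != j) G l =
  op (\big[op/idx]_(0 <= l < j) G l) (\big[op/idx]_(j.+1 <= l < n.+1) G l).
Proof.
rewrite -(big_mkord (fun l => l != nat_of_ord j)).
rewrite (big_cat_nat _ (n := j)) //= ?(ltnW (ltn_ord j)) //.
rewrite (big_ltn_cond (m := nat_of_ord j)) ?ltn_ord // eqxx.
congr (op _ _).
  rewrite [LHS]big_nat_cond [RHS]big_nat_cond; apply: eq_bigl => l /=.
  by rewrite andbT; apply/andb_idr => lj; rewrite neq_ltn lj.
rewrite [LHS]big_nat_cond [RHS]big_nat_cond; apply: eq_bigl => l /=.
rewrite andbT; apply/andb_idr => /andP[lj _]; by rewrite neq_ltn lj orbT.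
Qed.

Lemma big_rev_low j (G : nat -> R) :
  \big[op/idx]_(0 <= l < j) G l = \big[op/idx]_(1 <= i < j.+1) G (j - i)%N.
Proof.
rewrite big_nat_rev -[1%N]add0n big_addn subn1 /=.
by apply: eq_big_nat => i _; rewrite add0n addn1.
Qed.

Lemma big_shift_up n j (G : nat -> R) : (j <= n)%N ->
  \big[op/idx]_(j.+1 <= l < n.+1) G l = \big[op/idx]_(1 <= i < (n - j).+1) G (j + i)%N.
Proof.
move=> jn; rewrite -[j.+1]add1n big_addn subSn //.
by apply: eq_big_nat => i _; rewrite addnC.
Qed.

Lemma big_rev_up n j (G : nat -> R) : (j <= n)%N ->
  \big[op/idx]_(j.+1 <= l < n.+1) G l = \big[op/idx]_(1 <= i < (n - j).+1) G (n.+1 - i)%N.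
Proof.
move=> jn; rewrite big_shift_up // big_nat_rev.
by apply: eq_big_nat => i /andP[i1 i2]; congr G; lia.
Qed.

End BigHelp.

Lemma sum_lin j c : (\sum_(0 <= l < j) (c + l) = j * c + 'C(j, 2))%N.
Proof. by rewrite big_split /= sum_nat_const_nat bin2_sum subn0. Qed.

Lemma prod_sfrac (I : Type) (r : seq I) (P : pred I) (e : I -> nat) (a b : I -> rat) :
  \prod_(l <- r | P l) ((-1)^+(e l) * a l / b l) =
  (-1)^+(\sum_(l <- r | P l) e l) * (\prod_(l <- r | P l) a l) / \prod_(l <- r | P l) b l.
Proof. by rewrite !big_split /= prodfV prodrXr. Qed.

Lemma inv_sfrac e (a b : rat) : ((-1)^+e * a / b)^-1 = (-1)^+e * b / a.
Proof. by rewrite !invfM invrK invr_sign mulrAC. Qed.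

Lemma signz a b c : (-1 : rat) ^ ((a%:Z) - (b%:Z) - (c%:Z)) = (-1) ^+ (a + b + c).
Proof.
have h : (-1 : rat) != 0 by rewrite oppr_eq0 oner_eq0.
by rewrite !expfzDr // -!invr_expz -!exprnP !invr_sign !exprD.
Qed.

Definition Fq (u : nat) : rat := (fib u)%:R.
Definition xq (u : nat) : rat := Fq u.+1 / Fq u.
Definition Ffact (k : nat) : rat := \prod_(1 <= i < k.+1) Fq i.

Lemma fib_gt0 u : (0 < u)%N -> (0 < fib u)%N.
Proof.
elim/ltn_ind: u => [[|[|u]]] // IH _.
by rewrite (_ : fib u.+2 = fib u.+1 + fib u) // addn_gt0 IH.
Qed.

Lemma Fq_neq0 u : (0 < u)%N -> Fq u != 0.
Proof. by move=> /fib_gt0 h; rewrite /Fq pnatr_eq0 -lt0n. Qed.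

Lemma FqSS u : Fq u.+2 = Fq u.+1 + Fq u.
Proof. by rewrite /Fq -natrD. Qed.

Lemma dOc v u : (v <= u)%N -> Fq u * Fq v.+1 - Fq u.+1 * Fq v = (-1)^+v * Fq (u - v).
Proof.
elim: v u => [|v IH] u H.
  by rewrite /Fq /= subn0 mulr1 mulr0 subr0 mul1r.
case: u H => [//|u] H.
rewrite subSS exprS -mulrA -IH // !FqSS; ring.
Qed.

Lemma xd u v : (0 < v)%N -> (v <= u)%N ->
  xq u - xq v = (-1)^+(v.+1) * Fq (u - v) / (Fq u * Fq v).
Proof.
move=> v0 vu; have u0 : (0 < u)%N by apply: leq_trans vu.
rewrite exprS -[_ * _ * Fq (u - v)]mulrA -dOc // /xq.
by field; rewrite ?Fq_neq0.
Qed.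

Lemma xq_neq u v : (0 < v)%N -> (v < u)%N -> xq u != xq v.
Proof.
move=> v0 vu; rewrite -subr_eq0 xd ?(ltnW vu) //.
rewrite !mulf_neq0 ?signr_eq0 ?Fq_neq0 ?invr_eq0 ?subn_gt0 //.
by rewrite mulf_neq0 ?Fq_neq0 // (leq_trans v0 (ltnW vu)).
Qed.

Lemma prod_neq_split n (j : 'I_n.+1) (G : nat -> rat) :
  \prod_(l < n.+1 | l != j) G l = \prod_(0 <= l < j) G l * \prod_(j.+1 <= l < n.+1) G l.
Proof. exact: (big_neq_split _ _ _ n j G). Qed.
Lemma sum_neq_split n (j : 'I_n.+1) (G : nat -> nat) :
  (\sum_(l < n.+1 | l != j) G l = \sum_(0 <= l < j) G l + \sum_(j.+1 <= l < n.+1) G l)%N.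
Proof. exact: (big_neq_split _ _ _ n j G). Qed.
Lemma prod_rev_low j (G : nat -> rat) :
  \prod_(0 <= l < j) G l = \prod_(1 <= i < j.+1) G (j - i)%N.
Proof. exact: big_rev_low. Qed.
Lemma prod_shift_up n j (G : nat -> rat) : (j <= n)%N ->
  \prod_(j.+1 <= l < n.+1) G l = \prod_(1 <= i < (n - j).+1) G (j + i)%N.
Proof. exact: big_shift_up. Qed.
Lemma prod_rev_up n j (G : nat -> rat) : (j <= n)%N ->
  \prod_(j.+1 <= l < n.+1) G l = \prod_(1 <= i < (n - j).+1) G (n.+1 - i)%N.
Proof. exact: big_rev_up. Qed.

Section Concrete.
Variables (alpha n : nat).
Hypothesis halpha : (0 < alpha)%N.

Definition U (j : nat) : nat := (alpha + j + n).+1.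
Definition V (l : nat) : nat := (n.+1 - l)%N.
Definition z (j : 'I_n.+1) : rat := xq (U j).
Definition w (j : 'I_n.+1) : rat := xq (V j).

Lemma Vpos (l : 'I_n.+1) : (0 < V l)%N.
Proof. by rewrite /V subn_gt0 ltn_ord. Qed.
Lemma Upos j : (0 < U j)%N.
Proof. by []. Qed.

Lemma z_inj : injective z.
Proof.
move=> a b /eqP; apply: contraTeq => ab; rewrite /z.
case: (ltngtP a b) => [lt|lt|/val_inj eq]; last by rewrite eq eqxx in ab.
  by rewrite eq_sym xq_neq // /U; lia.
by rewrite xq_neq // /U; lia.
Qed.

Lemma w_inj : injective w.
Proof.
move=> a b /eqP; apply: contraTeq => ab; rewrite /w.
have := ltn_ord a; have := ltn_ord b => ha hb.
case: (ltngtP a b) => [lt|lt|/val_inj eq]; last by rewrite eq eqxx in ab.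
  by rewrite xq_neq ?Vpos // /V; lia.
by rewrite eq_sym xq_neq ?Vpos // /V; lia.
Qed.

Lemma zw_neq j l : z j != w l.
Proof. by rewrite /z /w xq_neq ?Vpos // /U /V; lia. Qed.

Lemma fzw (j l : 'I_n.+1) :
  z j - w l = (-1)^+(V l).+1 * Fq (alpha + j + l) / (Fq (U j) * Fq (V l)).
Proof.
have := ltn_ord l => hl.
rewrite /z /w xd ?Vpos //; last by rewrite /U /V; lia.
by congr (_ * Fq _ / _); rewrite /U /V; lia.
Qed.

Lemma fwz (k l : 'I_n.+1) :
  w k - z l = (-1)^+(V k).+2 * Fq (alpha + k + l) / (Fq (V k) * Fq (U l)).
Proof.
rewrite -opprB fzw !exprS addnAC [Fq (V k) * _]mulrC; ring.
Qed.

Definition e4 (j l : nat) : nat := if (l < j)%N then (U l).+1 else (U j).+2.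
Definition e5 (k l : nat) : nat := if (l < k)%N then (V k).+2 else (V l).+1.
Definition dd (j l : nat) : nat := if (l < j)%N then (j - l)%N else (l - j)%N.

Lemma fzz (j l : 'I_n.+1) : l != j ->
  z j - z l = (-1)^+(e4 j l) * Fq (dd j l) / (Fq (U j) * Fq (U l)).
Proof.
move=> lj; rewrite /e4 /dd /z.
case: ltnP => h.
  rewrite xd //; last by rewrite /U; lia.
  by congr (_ * Fq _ / _); rewrite /U; lia.
have h' : (j < l)%N by rewrite ltn_neqAle h andbT eq_sym.
rewrite -opprB xd //; last by rewrite /U; lia.
rewrite !exprS (_ : (U l - U j = l - j)%N); last by rewrite /U; lia.
rewrite [Fq (U j) * _]mulrC; ring.
Qed.

Lemma fww (k l : 'I_n.+1) : l != k ->
  w k - w l = (-1)^+(e5 k l) * Fq (dd k l) / (Fq (V k) * Fq (V l)).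
Proof.
move=> lk; have := ltn_ord k; have := ltn_ord l => hl hk.
rewrite /e5 /dd /w.
case: ltnP => h.
  rewrite -opprB xd ?Vpos //; last by rewrite /V; lia.
  rewrite !exprS (_ : (V l - V k = k - l)%N); last by rewrite /V; lia.
  rewrite [Fq (V k) * _]mulrC; ring.
have h' : (k < l)%N by rewrite ltn_neqAle h andbT eq_sym.
rewrite xd ?Vpos //; last by rewrite /V; lia.
by congr (_ * Fq _ / _); rewrite /V; lia.
Qed.


Lemma P1E (j : 'I_n.+1) : \prod_l (z j - w l) =
  (-1)^+(\sum_(l < n.+1) (V l).+1) * \prod_(l < n.+1) Fq (alpha + j + l)
   / (Fq (U j) ^+ n.+1 * \prod_(l < n.+1) Fq (V l)).
Proof.
rewrite (eq_bigr _ (fun l _ => fzw j l)) prod_sfrac big_split /=.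
by rewrite prodr_const card_ord.
Qed.

Lemma P2E (k : 'I_n.+1) : \prod_l (w k - z l) =
  (-1)^+(\sum_(l < n.+1) (V k).+2) * \prod_(l < n.+1) Fq (alpha + k + l)
   / (Fq (V k) ^+ n.+1 * \prod_(l < n.+1) Fq (U l)).
Proof.
rewrite (eq_bigr _ (fun l _ => fwz k l)) prod_sfrac big_split /=.
by rewrite prodr_const card_ord.
Qed.

Lemma Ffact_neq0 k : Ffact k != 0.
Proof.
rewrite /Ffact prodf_seq_neq0; apply/allP => i; rewrite mem_index_iota.
by move=> /andP[i1 _]; rewrite Fq_neq0.
Qed.

Lemma dd_prod (j : 'I_n.+1) :
  \prod_(l < n.+1 | l != j) Fq (dd j l) = Ffact j * Ffact (n - j).
Proof.
have jn : (j <= n)%N by rewrite -ltnS.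
rewrite (prod_neq_split n j (fun l => Fq (dd j l))) prod_rev_low .
rewrite (prod_shift_up n j _ jn) /Ffact.
congr (_ * _); apply: eq_big_nat => i /andP[i1 i2]; rewrite /dd;
  case: ltnP => h; congr Fq; lia.
Qed.

Lemma P4E (j : 'I_n.+1) : \prod_(l | l != j) (z j - z l) =
  (-1)^+(\sum_(l < n.+1 | l != j) e4 j l) * (Ffact j * Ffact (n - j))
   / (Fq (U j) ^+ n * \prod_(l < n.+1 | l != j) Fq (U l)).
Proof.
rewrite (eq_bigr _ (fun l lj => fzz j l lj)) prod_sfrac big_split /=.
by rewrite prodr_const cardC1 card_ord dd_prod.
Qed.

Lemma P5E (k : 'I_n.+1) : \prod_(l | l != k) (w k - w l) =
  (-1)^+(\sum_(l < n.+1 | l != k) e5 k l) * (Ffact k * Ffact (n - k))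
   / (Fq (V k) ^+ n * \prod_(l < n.+1 | l != k) Fq (V l)).
Proof.
rewrite (eq_bigr _ (fun l lk => fww k l lk)) prod_sfrac big_split /=.
by rewrite prodr_const cardC1 card_ord dd_prod.
Qed.

Lemma FB a (k : 'I_n.+1) : (0 < a)%N ->
  fibonomial (a + n) (n - k) * fibonomial (a + k - 1) k =
  (\prod_(l < n.+1 | l != k) Fq (a + l)) / (Ffact k * Ffact (n - k)).
Proof.
move=> a0; have kn : (k <= n)%N by rewrite -ltnS.
have fibE N m : fibonomial N m = (\prod_(1 <= i < m.+1) Fq (N - i + 1)) / Ffact m.
  by rewrite /fibonomial big_split /= prodfV.
rewrite !fibE (prod_neq_split n k (fun l => Fq (a + l))).
rewrite [\prod_(0 <= l < k) _]prod_rev_low [\prod_(k.+1 <= l < n.+1) _](prod_rev_up n k _ kn).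
have -> : \prod_(1 <= i < (n - k).+1) Fq (a + n - i + 1) =
          \prod_(1 <= i < (n - k).+1) Fq (a + (n.+1 - i)).
  by apply: eq_big_nat => i /andP[i1 i2]; congr Fq; lia.
have -> : \prod_(1 <= i < k.+1) Fq (a + k - 1 - i + 1) =
          \prod_(1 <= i < k.+1) Fq (a + (k - i)).
  by apply: eq_big_nat => i /andP[i1 i2]; congr Fq; lia.
rewrite invfM; ring.
Qed.


Lemma sign_par (j k : 'I_n.+1) :
  (-1 : rat)^+(n * (alpha + j + k) + 'C(j, 2) + 'C(k, 2)) =
  - ((-1)^+(\sum_(l < n.+1) (V l).+1) * (-1)^+(\sum_(l < n.+1) (V k).+2)
     * (-1)^+((V k).+1) * (-1)^+(\sum_(l < n.+1 | l != j) e4 j l)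
     * (-1)^+(\sum_(l < n.+1 | l != k) e5 k l) * (-1)^+((V k).+1)).
Proof.
have jn : (j <= n)%N by rewrite -ltnS.
have kn : (k <= n)%N by rewrite -ltnS.
rewrite -!exprD -[RHS]mulN1r -exprS.
have sgn_eq a b : odd a = odd b -> (-1 : rat)^+a = (-1)^+b.
  by move=> h; rewrite -[LHS]signr_odd h signr_odd.
apply: sgn_eq.
set Lo := (\sum_(0 <= l < k) (V l).+1)%N.
set Up := (\sum_(k.+1 <= l < n.+1) (V l).+1)%N.
have eS2 : (\sum_(l < n.+1) (V k).+2 = n.+1 * (V k).+2)%N.
  by rewrite sum_nat_const card_ord.
have eS4 : (\sum_(l < n.+1 | l != j) e4 j l =
    j * (alpha + n + 2) + 'C(j, 2) + (n - j) * (U j).+2)%N.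
  rewrite (sum_neq_split n j (e4 j)) -sum_lin.
  rewrite (@eq_big_nat _ _ _ 0%N _ _ (fun l => alpha + n + 2 + l)%N); last first.
    by move=> l /andP[_ lj]; rewrite /e4 lj /U; lia.
  rewrite (@eq_big_nat _ _ _ j.+1 _ _ (fun l => (U j).+2)); last first.
    by move=> l /andP[jl _]; rewrite /e4 ltnNge (ltnW jl).
  by rewrite sum_nat_const_nat subSS.
have eS1 : (\sum_(l < n.+1) (V l).+1 = Lo + (V k).+1 + Up)%N.
  rewrite (bigD1 k) //= (sum_neq_split n k (fun l => (V l).+1)) -/Lo -/Up.
  by rewrite addnCA addnA.
have eS5 : (\sum_(l < n.+1 | l != k) e5 k l = k * (V k).+2 + Up)%N.
  rewrite (sum_neq_split n k (e5 k)).
  rewrite (@eq_big_nat _ _ _ 0%N _ _ (fun l => (V k).+2)); last first.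
    by move=> l /andP[_ lk]; rewrite /e5 lk.
  rewrite (@eq_big_nat _ _ _ k.+1 _ _ (fun l => (V l).+1)); last first.
    by move=> l /andP[kl _]; rewrite /e5 ltnNge (ltnW kl).
  by rewrite sum_nat_const_nat subn0.
have eLo : (Lo + 'C(k, 2) = k * n.+2)%N.
  rewrite -bin2_sum -big_split /=.
  rewrite (eq_big_nat _ _ (F2 := fun=> n.+2)) ?sum_nat_const_nat ?subn0 //.
  by move=> l /andP[_ lk]; rewrite /V; lia.
rewrite eS1 eS2 eS4 eS5.
move/(congr1 odd): eLo; rewrite !oddD !oddM /V /U !oddS !oddD.
do 4!rewrite ?oddS ?oddD ?oddM.
rewrite !oddB ?(leqW kn) //.
do 4!rewrite ?oddS ?oddD ?oddM.
move: (odd Lo) (odd Up) (odd 'C(j, 2)) (odd 'C(k, 2)) (odd n) (odd alpha)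
  (odd j) (odd k) => [] [] [] [] [] [] [] [] //.
Qed.


Definition Nc (j k : 'I_n.+1) : rat :=
  - (\prod_l (z j - w l)) * (\prod_l (w k - z l)) /
     ((z j - w k) * \prod_(l | l != j) (z j - z l) * \prod_(l | l != k) (w k - w l)).

Lemma entryE (j k : 'I_n.+1) :
  (-1 : rat) ^ ((n * (alpha + j + k))%:Z - ('C(j, 2))%:Z - ('C(k, 2))%:Z)
       * (fib (alpha + j + k))%:R
       * fibonomial (alpha + n + j) (n - k)
       * fibonomial (alpha + n + k) (n - j)
       * fibonomial (alpha + j + k - 1) j
       * fibonomial (alpha + j + k - 1) k
  = Fq (U j) * Nc j k * ((-1)^+(V k).+1 * Fq (V k)).
Proof.
rewrite signz.
have h1 := FB (alpha + j) k (ltn_addr _ halpha).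
have h2 := FB (alpha + k) j (ltn_addr _ halpha).
rewrite (addnAC alpha j n) in h1; rewrite (addnAC alpha k n) (addnAC alpha k j) in h2.
have -> : forall s f x1 x2 x3 x4 : rat,
  s * f * x1 * x2 * x3 * x4 = s * f * (x1 * x4) * (x2 * x3) by move=> *; ring.
rewrite h1 h2 -/(Fq (alpha + j + k)).
have inv3 : forall e1 e2 e3 (a1 b1 a2 b2 a3 b3 : rat),
  ((-1)^+e1 * a1 / b1 * ((-1)^+e2 * a2 / b2) * ((-1)^+e3 * a3 / b3))^-1 =
  (-1)^+e1 * b1 / a1 * ((-1)^+e2 * b2 / a2) * ((-1)^+e3 * b3 / a3).
  by move=> *; rewrite 2!invfM !inv_sfrac.
rewrite /Nc P1E P2E P4E P5E fzw inv3 sign_par.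
have eP1 : \prod_(l < n.+1) Fq (alpha + j + l) =
   Fq (alpha + j + k) * \prod_(l < n.+1 | l != k) Fq (alpha + j + l).
  by rewrite (bigD1 k).
have eP2 : \prod_(l < n.+1) Fq (alpha + k + l) =
   Fq (alpha + j + k) * \prod_(l < n.+1 | l != j) Fq (alpha + k + l).
  by rewrite (bigD1 j) // addnAC.
have eFU : \prod_(l < n.+1) Fq (U l) = Fq (U j) * \prod_(l < n.+1 | l != j) Fq (U l).
  by rewrite (bigD1 j).
have eFV : \prod_(l < n.+1) Fq (V l) = Fq (V k) * \prod_(l < n.+1 | l != k) Fq (V l).
  by rewrite (bigD1 k).
rewrite eP1 eP2 eFU eFV !exprS.
have nz1 : Fq (alpha + j + k) != 0 by rewrite Fq_neq0 // !addn_gt0 halpha.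
have nz2 : Fq (U j) != 0 by rewrite Fq_neq0.
have nz3 : Fq (V k) != 0 by rewrite Fq_neq0 ?Vpos.
have nz4 : \prod_(l < n.+1 | l != k) Fq (alpha + j + l) != 0.
  by apply/prodf_neq0 => l _; rewrite Fq_neq0 // !addn_gt0 halpha.
have nz5 : \prod_(l < n.+1 | l != j) Fq (alpha + k + l) != 0.
  by apply/prodf_neq0 => l _; rewrite Fq_neq0 // !addn_gt0 halpha.
have nz6 : \prod_(l < n.+1 | l != j) Fq (U l) != 0.
  by apply/prodf_neq0 => l _; rewrite Fq_neq0.
have nz7 : \prod_(l < n.+1 | l != k) Fq (V l) != 0.
  by apply/prodf_neq0 => l _; rewrite Fq_neq0 ?Vpos.
have nz8 := Ffact_neq0 j; have nz9 := Ffact_neq0 (n - j).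
have nz10 := Ffact_neq0 k; have nz11 := Ffact_neq0 (n - k).
have nz12 : Fq (U j) ^+ n != 0 by rewrite expf_neq0.
have nz13 : Fq (V k) ^+ n != 0 by rewrite expf_neq0.
move: nz1 nz2 nz3 nz4 nz5 nz6 nz7 nz8 nz9 nz10 nz11 nz12 nz13.
move: (Fq (alpha + j + k)) (Fq (U j)) (Fq (V k)) (\prod_(l < n.+1 | l != k) Fq (alpha + j + l))
  (\prod_(l < n.+1 | l != j) Fq (alpha + k + l)) (\prod_(l < n.+1 | l != j) Fq (U l))
  (\prod_(l < n.+1 | l != k) Fq (V l)) (Ffact j) (Ffact (n - j)) (Ffact k) (Ffact (n - k))
  (Fq (U j) ^+ n) (Fq (V k) ^+ n).
move: ((-1 : rat) ^+ (\sum_(l < n.+1) (V l).+1)) ((-1 : rat) ^+ (\sum_(l < n.+1) (V k).+2))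
  ((-1 : rat) ^+ (V k).+1) ((-1 : rat) ^+ (\sum_(l < n.+1 | l != j) e4 j l))
  ((-1 : rat) ^+ (\sum_(l < n.+1 | l != k) e5 k l)).
move=> s1 s2 s3 s4 s5 a b c d e f g h i p q r t.
move=> n1 n2 n3 n4 n5 n6 n7 n8 n9 n10 n11 n12 n13.
by field; rewrite ?n1 ?n2 ?n3 ?n4 ?n5 ?n6 ?n7 ?n8 ?n9 ?n10 ?n11 ?n12 ?n13.
Qed.


Lemma termE (i j k : 'I_n.+1) :
  ((fib (alpha + i + j))%:R)^-1 * (Fq (U j) * Nc j k * ((-1)^+(V k).+1 * Fq (V k)))
  = ((-1)^+(V i).+1 / Fq (V i) * ((-1)^+(V k).+1 * Fq (V k))) *
    ((z j - w i)^-1 * Nc j k).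
Proof.
rewrite fzw inv_sfrac (_ : (alpha + j + i = alpha + i + j)%N); last by lia.
rewrite -/(Fq _).
have nz1 : Fq (alpha + i + j) != 0 by rewrite Fq_neq0 // !addn_gt0 halpha.
have nz2 : Fq (U j) != 0 by rewrite Fq_neq0.
have nz3 : Fq (V i) != 0 by rewrite Fq_neq0 ?Vpos.
rewrite -[(-1)^+(V i).+1]signr_odd; case: (odd _) => /=.
  by field; rewrite ?nz1 ?nz2 ?nz3.
by field; rewrite ?nz1 ?nz2 ?nz3.
Qed.

Lemma diagE (k : 'I_n.+1) :
  (-1)^+(V k).+1 / Fq (V k) * ((-1)^+(V k).+1 * Fq (V k)) = 1.
Proof.
have nz3 : Fq (V k) != 0 by rewrite Fq_neq0 ?Vpos.
rewrite -[(-1)^+(V k).+1]signr_odd; case: (odd _) => /=.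
  by field.
by field.
Qed.

End Concrete.

Theorem theorem3p4 (alpha n : nat) (halpha : (0 < alpha)%N) :
  let A : 'M[rat]_(n.+1) :=
    \matrix_(i, j) ((fib (alpha + i + j))%:R)^-1 in
  A \in unitmx /\
  invmx A =
    \matrix_(i, j)
      ((-1 : rat) ^ ((n * (alpha + i + j))%:Z - ('C(i, 2))%:Z - ('C(j, 2))%:Z)
       * (fib (alpha + i + j))%:R
       * fibonomial (alpha + n + i) (n - j)
       * fibonomial (alpha + n + j) (n - i)
       * fibonomial (alpha + i + j - 1) i
       * fibonomial (alpha + i + j - 1) j).
Proof.
move=> A.
set B := \matrix_(i, j) _.
have AB : A *m B = 1%:M.
  apply/matrixP => i k; rewrite !mxE.
  rewrite (eq_bigr (fun j => ((-1)^+(V n i).+1 / Fq (V n i) *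
     ((-1)^+(V n k).+1 * Fq (V n k))) * ((z alpha n j - w n i)^-1 * Nc alpha n j k))); last first.
    by move=> j _; rewrite !mxE (entryE alpha n halpha) (termE alpha n halpha).
  rewrite -mulr_sumr /Nc (@cauchy _ _ _ _ (z_inj alpha n halpha) (w_inj alpha n halpha) (zw_neq alpha n halpha)).
  case: eqVneq => [<-|ik] /=; first by rewrite diagE.
  by rewrite mulr0.
have [Au _] := mulmx1_unit AB.
split => //.
by rewrite -[B]mul1mx -(mulVmx Au) -mulmxA AB mulmx1.
Qed.
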